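(* Let $n\ge 1$, $L>0$, and let $f:[0,1]^n\to\mathbb{R}$ satisfy $|f(x)-f(y)|\le L\|x-y\|$ for all $x,y\in[0,1]^n$, and let $x_*\in[0,1]^n$ be a minimizer of $f$. Run the algorithm described in the context on $f$ for $T\ge1$ queries, producing edge vectors $v_1,\dots,v_T$ and values $f_t=f(P(x_t))$. Then $$\sum_{t=1}^T f_t-\sum_{t=1}^T f(x_* )\le (1+\theta)L\sum_{t=1}^T\|v_t\|,$$ where $\theta=2^{1/n}$.
   Context: Notation: $\|\cdot\|$ is the Euclidean norm; $\Omega=[0,1]^n$; $\theta=2^{1/n}$; $P:\mathbb{R}^n\to\Omega$ is the Euclidean projection onto $\Omega$ (coordinatewise clipping to $[0,1]$); $e_i$ is the $i$-th standard basis vector and $v(i)$ the $i$-th coordinate of $v$. The algorithm maintains a list of candidates, each a triple (center $x$, edge vector $v$, score $s$). Splitting rule: given an evaluated point $x_a$ with edge vector $v_a$ and value $f_a$, let $I$ be an index maximizing $v_a(i)$ over $i\in\{1,\dots,n\}$ (ties broken by smallest index), let $z=\tfrac{v_a(I)}{2}e_I$, and add to the list the two candidates $(x_a+z,\ v_a-z,\ f_a-L\|v_a\|)$ and $(x_a-z,\ v_a-z,\ f_a-L\|v_a\|)$. Initialization: $x_1=v_1=(\theta^{-1},\theta^{-2},\dots,\theta^{-n})$, $f_1=f(P(x_1))$, and apply the splitting rule to $(x_1,v_1,f_1)$. For each $t\ge 2$: remove from the list a candidate with the smallest score (ties arbitrary), call its center $x_t$ and edge vector $v_t$, evaluate $f_t=f(P(x_t))$,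 and apply the splitting rule to $(x_t,v_t,f_t)$. *)

(* Defs.v *)
From HB Require Import structures.
From mathcomp Require Import all_boot all_order all_algebra.
From mathcomp Require Import reals exp.
Set Implicit Arguments. Unset Strict Implicit. Unset Printing Implicit Defensive.
Import Order.TTheory GRing.Theory Num.Theory.
Local Open Scope ring_scope.

Section Defs.
Variables (R : realType) (n : nat).

Definition vec := {ffun 'I_n -> R}.

Definition enorm (v : vec) : R := Num.sqrt (\sum_(i < n) v i ^+ 2).

Definition in_Omega (x : vec) : Prop := forall i, 0 <= x i <= 1.

Definition proj (x : vec) : vec := [ffun i => Num.max 0 (Num.min 1 (x i))].

Definition theta : R := powR 2 (n%:R)^-1.

Definition init_vec : vec := [ffun i : 'I_n => theta ^- (i.+1)].

(* candidate = (center, edge vector, score) *)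
Definition cand := (vec * vec * R)%type.

Definition first_argmax (v : vec) (I : 'I_n) : Prop :=
  (forall j, v j <= v I) /\ (forall j : 'I_n, (j < I)%N -> v j < v I).

Definition half_edge (v : vec) (I : 'I_n) : vec :=
  [ffun i => if i == I then v I / 2 else 0].

Definition split_into (L : R) (x v : vec) (fa : R) (Q Q' : seq cand) : Prop :=
  exists I, first_argmax v I /\
    Q' = Q ++ [:: (x + half_edge v I, v - half_edge v I, fa - L * enorm v);
                  (x - half_edge v I, v - half_edge v I, fa - L * enorm v)].

Definition alg_step (L : R) (f : vec -> R) (Q Q' : seq cand) (x v : vec) : Prop :=
  exists (s : R) (rest : seq cand),
    perm_eq Q ((x, v, s) :: rest) /\
    (forall d, d \in rest -> s <= d.2) /\
    split_into L x v (f (proj x)) rest Q'.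

(* A run of the algorithm with T queries: X t, V t are the center and edge
   vector of query t (1 <= t <= T), Q t is the candidate list after query t. *)
Definition valid_run (L : R) (f : vec -> R) (T : nat)
    (X V : nat -> vec) (Q : nat -> seq cand) : Prop :=
  X 1%N = init_vec /\ V 1%N = init_vec /\
  split_into L (X 1%N) (V 1%N) (f (proj (X 1%N))) [::] (Q 1%N) /\
  (forall t, (2 <= t <= T)%N -> alg_step L f (Q t.-1) (Q t) (X t) (V t)).

End Defs.

(* Main.v *)
Require Import Defs.
From HB Require Import structures.
From mathcomp Require Import all_boot all_order all_algebra.
From mathcomp Require Import reals exp.
From mathcomp Require Import lra ring.
Import Order.TTheory GRing.Theory Num.Theory.
Local Open Scope ring_scope.

Lemma enorm_ge0 {R : realType} {n : nat} (a : vec R n) : 0 <= enorm a.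
Proof. exact: sqrtr_ge0. Qed.

Lemma enorm_le {R : realType} {n : nat} (a b : vec R n) :
  (forall i, `|a i| <= `|b i|) -> enorm a <= enorm b.
Proof.
move=> H; apply: ler_wsqrtr; apply: ler_sum => i _.
rewrite -(real_normK (num_real (a i))) -(real_normK (num_real (b i))).
by rewrite lerXn2r ?nnegrE ?normr_ge0.
Qed.

Lemma clip_cases {R : realType} (a : R) :
  let u := Num.max 0 (Num.min 1 a) in
  0 <= u <= 1 /\ (u = a \/ (u = 0 /\ a <= 0) \/ (u = 1 /\ 1 <= a)).
Proof.
rewrite /= /Num.max /Num.min.
case: (ltP 1 a) => h1.
  rewrite ltr01; split; first by rewrite ler01 lexx.
  right; right; split=> //; exact: ltW.
case: (ltP 0 a) => h2.
  split; [by rewrite (ltW h2) h1|by left].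
split; [by rewrite lexx ler01|by right; left].
Qed.

Lemma clip_lip {R : realType} (a b : R) :
  `|Num.max 0 (Num.min 1 a) - Num.max 0 (Num.min 1 b)| <= `|a - b|.
Proof.
have [/andP[ua1 ua2] ha] := clip_cases a.
have [/andP[ub1 ub2] hb] := clip_cases b.
move: ua1 ua2 ha ub1 ub2 hb.
set u := Num.max 0 _; set v := Num.max 0 _ => ua1 ua2 ha ub1 ub2 hb.
clearbody u v.
rewrite ler_norml; case: (lerP 0 (a - b)) => hab.
  rewrite (ger0_norm hab).
  by case: ha => [ha|[[ha ?]|[ha ?]]]; case: hb => [hb|[[hb ?]|[hb ?]]]; apply/andP; split; lra.
rewrite (ltr0_norm hab).
by case: ha => [ha|[[ha ?]|[ha ?]]]; case: hb => [hb|[[hb ?]|[hb ?]]]; apply/andP; split; lra.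
Qed.

Lemma proj_lip {R : realType} {n : nat} (x y : vec R n) :
  enorm (proj x - proj y) <= enorm (x - y).
Proof. by apply: enorm_le => i; rewrite !ffunE; apply: clip_lip. Qed.

Lemma proj_id {R : realType} {n : nat} (y : vec R n) : in_Omega y -> proj y = y.
Proof.
move=> H; apply/ffunP => i; rewrite ffunE.
have /andP[h0 h1] := H i.
rewrite /Num.max /Num.min.
have -> : (1 < y i) = false by rewrite ltNge h1.
by case: ifP => // /negbT; rewrite -leNgt => b; apply/eqP; rewrite eq_le b h0.
Qed.

Lemma proj_in {R : realType} {n : nat} (x : vec R n) : in_Omega (proj x).
Proof. by move=> i; rewrite ffunE; have [] := clip_cases (x i). Qed.

Lemma thetaXn {R : realType} {n : nat} : (1 <= n)%N -> theta R n ^+ n = 2.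
Proof.
move=> n1; rewrite /theta -powR_mulrn ?powR_ge0 // -powRrM mulVf ?powRr1 //.
by rewrite pnatr_eq0 -lt0n.
Qed.

Lemma theta_gt1 {R : realType} {n : nat} : (1 <= n)%N -> 1 < theta R n.
Proof.
move=> n1; rewrite ltNge; apply/negP => h.
have := exprn_ile1 n (powR_ge0 _ _) h; rewrite -/(theta R n) thetaXn //.
by rewrite -[1]/(1%:R) ler_nat.
Qed.

Definition inbox {R : realType} {n : nat} (x v y : vec R n) : Prop :=
  forall i, `|y i - x i| <= v i.

Definition nice {R : realType} {n : nat} (c : R) (e : 'I_n -> 'I_n) (v : vec R n) : Prop :=
  0 < c /\ injective e /\ forall i, v i = c * theta R n ^- (e i).+1.

Lemma inbox_enorm {R : realType} {n : nat} (x v y : vec R n) :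
  inbox x v y -> enorm (y - x) <= enorm v.
Proof.
move=> H; apply: enorm_le => i; rewrite !ffunE.
by apply: le_trans (H i) _; apply: ler_norm.
Qed.

Lemma nice_enorm {R : realType} {n : nat} c e (v : vec R n) :
  nice c e v -> enorm v = c * enorm (init_vec R n).
Proof.
move=> [c0 [ie hv]]; rewrite /enorm.
under eq_bigr do rewrite hv exprMn.
rewrite -mulr_sumr sqrtrM ?exprn_ge0 ?ltW // sqrtr_sqr ger0_norm ?ltW //.
congr (_ * Num.sqrt _); rewrite [RHS](reindex_inj ie) /=; apply: eq_bigr => i _.
by rewrite ffunE.
Qed.

Lemma val_ord_pred (n : nat) (i : 'I_n) :
  (ord_pred i : nat) = if (i : nat) == 0%N then n.-1 else (i : nat).-1.
Proof.
case: i => [[|k] lt] /=.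
  by rewrite add0n modn_small // prednK // (leq_ltn_trans _ lt).
by rewrite modnDr modn_small // ltnW.
Qed.

Lemma thetaV_lt {R : realType} {n : nat} (m k : nat) : (1 <= n)%N -> (m < k)%N ->
  theta R n ^- k < theta R n ^- m.
Proof.
move=> n1 mk; have t1 := theta_gt1 (R:=R) n1.
rewrite ltf_pV2 ?posrE ?exprn_gt0 ?(lt_trans ltr01) //.
by rewrite ltr_eXn2l.
Qed.

Lemma nice_split {R : realType} {n : nat} c e (v : vec R n) I : (1 <= n)%N ->
  nice c e v -> first_argmax v I ->
  (e I : nat) = 0%N /\ nice (c / theta R n) (@ord_pred n \o e) (v - half_edge v I).
Proof.
move=> n1 [c0 [ie hv]] [amax _].
have t1 := theta_gt1 (R:=R) n1.
have t0 : 0 < theta R n by apply: lt_trans t1.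
have eI : (e I : nat) = 0%N.
  have [g eK gK] := injF_bij ie.
  case E: (e I : nat) => [|k] //; exfalso.
  have := amax (g (Ordinal n1)); rewrite !hv gK /= E.
  apply/negP; rewrite -ltNge ltr_pM2l //; exact: thetaV_lt.
split=> //; split; first by rewrite divr_gt0.
split; first exact: inj_comp (@ord_pred_inj n) ie.
move=> i; rewrite !ffunE /=.
change ((e i + n).-1 %% n)%N with (nat_of_ord (ord_pred (e i))); rewrite val_ord_pred.
case: (eqVneq i I) => [->|ne].
  rewrite eI /= prednK // hv eI expr1.
  have : theta R n ^- n = 2^-1 by rewrite thetaXn.
  move=> ->; rewrite -/(c / theta R n); lra.
have ei0 : (e i : nat) != 0%N.
  apply/eqP => h; move/eqP: ne; apply; apply: ie; apply: val_inj; by rewrite /= h eI.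
rewrite (negPf ei0) subr0 hv prednK ?lt0n // exprS invfM mulrA.
by [].
Qed.

Lemma nice_pos {R : realType} {n : nat} c e (v : vec R n) i : (1 <= n)%N ->
  nice c e v -> 0 < v i.
Proof.
move=> n1 [c0 [_ hv]]; rewrite hv mulr_gt0 // invr_gt0 exprn_gt0 //.
exact: lt_trans (theta_gt1 (R:=R) n1).
Qed.

Definition good {R : realType} {n : nat} (L : R) (f : vec R n -> R) (d : cand R n) : Prop :=
  (exists c e, nice c e d.1.2) /\
  (forall y, in_Omega y -> inbox d.1.1 d.1.2 y -> d.2 <= f y) /\
  f (proj d.1.1) - d.2 <= (1 + theta R n) * L * enorm d.1.2.

Lemma lower_bound {R : realType} {n : nat} (L : R) (f : vec R n -> R) x v y :
  (forall x y, in_Omega x -> in_Omega y -> `|f x - f y| <= L * enorm (x - y)) ->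
  0 < L -> in_Omega y -> inbox x v y -> f (proj x) - L * enorm v <= f y.
Proof.
move=> lip L0 yO hb.
have h1 := lip _ _ yO (proj_in x).
have h2 : enorm (y - proj x) <= enorm v.
  rewrite -{1}(proj_id _ yO); apply: le_trans (proj_lip _ _) _; exact: inbox_enorm.
have h3 : L * enorm (y - proj x) <= L * enorm v by rewrite ler_pM2l.
move: h1; rewrite ler_norml => /andP[h4 _]; lra.
Qed.

Lemma child_good {R : realType} {n : nat} (L : R) (f : vec R n -> R) x v c e I xc :
  (1 <= n)%N -> 0 < L ->
  (forall x y, in_Omega x -> in_Omega y -> `|f x - f y| <= L * enorm (x - y)) ->
  nice c e v -> first_argmax v I ->
  (xc = x + half_edge v I \/ xc = x - half_edge v I) ->
  good L f (xc, v - half_edge v I, f (proj x) - L * enorm v).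
Proof.
move=> n1 L0 lip nv am hx.
have [eI nv'] := @nice_split _ _ _ _ _ _ n1 nv am.
have vpos : forall i, 0 < v i by move=> i; exact: (@nice_pos _ _ _ _ _ i n1 nv).
have t1 := theta_gt1 (R:=R) n1.
have ev : enorm v = theta R n * enorm (v - half_edge v I).
  rewrite (@nice_enorm _ _ _ _ _ nv) (@nice_enorm _ _ _ _ _ nv') mulrA mulrCA divff ?mulr1 //.
  by rewrite gt_eqF // (lt_trans ltr01).
split; first by exists (c / theta R n), (@ord_pred n \o e).
split=> /=.
  move=> y yO hb; apply: lower_bound => // i.
  have := hb i; have := vpos I; have := vpos i; rewrite !ffunE.
  case: hx => -> ; rewrite !ffunE; case: ifP => _;
  rewrite !ler_norml => ? ? /andP[? ?]; apply/andP; split; lra.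
have hz : enorm (xc - x) <= enorm (v - half_edge v I).
  apply: enorm_le => i; have := vpos I; rewrite !ffunE.
  case: hx => -> ; rewrite !ffunE; case: eqP => [->|_] h.
  - by rewrite (_ : x I + v I / 2 - x I = v I - v I / 2) //; lra.
  - by rewrite addr0 subrr normr0 normr_ge0.
  - by rewrite (_ : x I - v I / 2 - x I = - (v I - v I / 2)) ?normrN //; lra.
  - by rewrite subr0 subrr normr0 normr_ge0.
have h1 := lip _ _ (proj_in xc) (proj_in x).
have h2 : L * enorm (proj xc - proj x) <= L * enorm (v - half_edge v I).
  by rewrite ler_pM2l //; apply: le_trans (proj_lip _ _) hz.
move: h1; rewrite ler_norml => /andP[_ h3].
rewrite ev.
have -> : (1 + theta R n) * L * enorm (v - half_edge v I) =
  L * enorm (v - half_edge v I) + L * (theta R n * enorm (v - half_edge v I)) by ring.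
lra.
Qed.

Definition Inv {R : realType} {n : nat} (L : R) (f : vec R n -> R) (Q : seq (cand R n)) : Prop :=
  (forall y, in_Omega y -> exists2 d, d \in Q & inbox d.1.1 d.1.2 y) /\
  (forall d, d \in Q -> good L f d).

Lemma cover_split {R : realType} {n : nat} (x v y : vec R n) I :
  (forall i, 0 < v i) -> inbox x v y ->
  inbox (x + half_edge v I) (v - half_edge v I) y \/
  inbox (x - half_edge v I) (v - half_edge v I) y.
Proof.
move=> vpos hb.
case: (lerP (x I) (y I)) => h; [left|right] => i; have := hb i; have := vpos I;
  rewrite !ffunE; case: eqP => [->|_]; rewrite ?subr0 ?addr0;
  rewrite !ler_norml => ? /andP[? ?]; apply/andP; split; lra.
Qed.

Lemma split_inv {R : realType} {n : nat} (L : R) (f : vec R n -> R) x v c e rest Q' :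
  (1 <= n)%N -> 0 < L ->
  (forall x y, in_Omega x -> in_Omega y -> `|f x - f y| <= L * enorm (x - y)) ->
  nice c e v -> split_into L x v (f (proj x)) rest Q' ->
  (forall d, d \in rest -> good L f d) ->
  (forall y, in_Omega y -> inbox x v y \/ exists2 d, d \in rest & inbox d.1.1 d.1.2 y) ->
  Inv L f Q'.
Proof.
move=> n1 L0 lip nv [I [am ->]] hrest hcov.
have vpos : forall i, 0 < v i by move=> i; exact: (@nice_pos _ _ _ _ _ i n1 nv).
split.
  move=> y yO; case: (hcov y yO) => [hb|[d dr hd]]; last first.
    by exists d => //; rewrite mem_cat dr.
  case: (@cover_split _ _ _ _ _ I vpos hb) => hc.
    exists (x + half_edge v I, v - half_edge v I, f (proj x) - L * enorm v) => //.
    by rewrite mem_cat in_cons eqxx orbT.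
  exists (x - half_edge v I, v - half_edge v I, f (proj x) - L * enorm v) => //.
  by rewrite mem_cat !in_cons eqxx !orbT.
move=> d; rewrite mem_cat !in_cons in_nil orbF => /orP[/hrest //|/orP[]/eqP->].
  by apply: (@child_good _ _ L f x v c e I _ n1 L0 lip nv am); left.
by apply: (@child_good _ _ L f x v c e I _ n1 L0 lip nv am); right.
Qed.

Lemma half_le_init {R : realType} {n : nat} (i : 'I_n) : (1 <= n)%N ->
  2^-1 <= init_vec R n i.
Proof.
move=> n1; rewrite ffunE -(thetaXn (R:=R) n1).
have := ltn_ord i; rewrite leq_eqVlt => /orP[/eqP->//|h].
by apply: ltW; apply: thetaV_lt.
Qed.

Lemma init_nice {R : realType} {n : nat} : (1 <= n)%N -> nice 1 id (init_vec R n).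
Proof.
move=> n1; split; first exact: ltr01.
by split=> // i; rewrite ffunE mul1r.
Qed.

Lemma init_box {R : realType} {n : nat} (y : vec R n) : (1 <= n)%N ->
  in_Omega y -> inbox (init_vec R n) (init_vec R n) y.
Proof.
move=> n1 yO i; have := half_le_init (R:=R) i n1; have /andP[y0 y1] := yO i.
rewrite ler_norml => h; apply/andP; split; lra.
Qed.

Theorem lemma3 (R : realType) (n : nat) (L : R) (f : vec R n -> R)
    (xstar : vec R n) (T : nat) (X V : nat -> vec R n)
    (Q : nat -> seq (cand R n)) :
  (1 <= n)%N -> 0 < L ->
  (forall x y, in_Omega x -> in_Omega y -> `|f x - f y| <= L * enorm (x - y)) ->
  in_Omega xstar -> (forall y, in_Omega y -> f xstar <= f y) ->
  (1 <= T)%N ->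
  valid_run L f T X V Q ->
  \sum_(1 <= t < T.+1) f (proj (X t)) - \sum_(1 <= t < T.+1) f xstar
    <= (1 + theta R n) * L * \sum_(1 <= t < T.+1) enorm (V t).
Proof.
move=> n1 L0 lip xO xmin T1 [X1 [V1 [sp1 steps]]].
have t1 := theta_gt1 (R:=R) n1.
have main : forall t, (1 <= t <= T)%N -> Inv L f (Q t) /\
    f (proj (X t)) - f xstar <= (1 + theta R n) * L * enorm (V t).
  elim=> [//|t IH] /andP[tp tT].
  case: t IH tp tT => [_ _ _|t IH _ tT].
    split.
      apply: (@split_inv _ _ L f (X 1%N) (V 1%N) 1 id [::] (Q 1%N) n1 L0 lip) => //.
      - by rewrite V1; exact: init_nice.
      - by move=> y yO; left; rewrite X1 V1; exact: init_box.
    have := @lower_bound _ _ L f (X 1%N) (V 1%N) xstar lip L0 xO.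
    rewrite X1 V1 => /(_ (init_box xstar n1 xO)) h.
    have h2 : L * enorm (init_vec R n) <= (1 + theta R n) * L * enorm (init_vec R n).
      rewrite -mulrA ler_peMl ?mulr_ge0 ?enorm_ge0 ?ltW //; lra.
    lra.
  have [[cov gd] _] := IH (ltnW tT).
  have [s [rest [pe [smin spl]]]] := steps t.+2 tT.
  rewrite /= in spl pe.
  have memQ : forall d, d \in Q t.+1 = (d \in (X t.+2, V t.+2, s) :: rest).
    by move=> d; rewrite (perm_mem pe).
  have gh : good L f (X t.+2, V t.+2, s) by apply: gd; rewrite memQ mem_head.
  have [[c [e nv]] [_ intr]] := gh.
  split.
    apply: (@split_inv _ _ L f _ _ c e rest _ n1 L0 lip nv spl).
      by move=> d dr; apply: gd; rewrite memQ in_cons dr orbT.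
    move=> y yO; have [d dQ hd] := cov y yO.
    move: dQ; rewrite memQ in_cons => /orP[/eqP dE|dr]; last by right; exists d.
    by left; rewrite dE in hd.
  have [d dQ hd] := cov xstar xO.
  have [_ [lb _]] := gd d dQ.
  have hs : s <= d.2.
    move: dQ; rewrite memQ in_cons => /orP[/eqP->//|dr]; exact: smin.
  have := lb xstar xO hd; rewrite /= in intr; lra.
rewrite -sumrB mulr_sumr; apply: ler_sum_nat => t /andP[ht htT].
by have [_ ] := main t ltac:(by rewrite ht -ltnS htT).
Qed.
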